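(* Let $K\ge 2$ and let $r_1\prec r_2\prec\cdots\prec r_K$ be ordered ranks. Let $D=\{(\mathbf{x}_i,y_i)\}_{i=1}^N$ be a training set with inputs $\mathbf{x}_i\in\mathcal{X}$ and ranks $y_i\in\{r_1,\dots,r_K\}$, and for $k=1,\dots,K-1$ define the extended binary labels $y_i^{(k)}=\mathbb{1}\{y_i\succ r_k\}\in\{0,1\}$. Let $g(\mathbf{x},\mathbf{W})\in\mathbb{R}$ be the (scalar) output of a model with parameters $\mathbf{W}$, let $\mathbf{b}=(b_1,\dots,b_{K-1})\in\mathbb{R}^{K-1}$ be bias parameters, let $\sigma(z)=1/(1+\exp(-z))$, and let $\lambda^{(1)},\dots,\lambda^{(K-1)}>0$ be fixed task weights. Consider the loss $$L(\mathbf{W},\mathbf{b})=-\sum_{i=1}^N\sum_{k=1}^{K-1}\lambda^{(k)}\Big[\log\big(\sigma(g(\mathbf{x}_i,\mathbf{W})+b_k)\big)\,y_i^{(k)}+\log\big(1-\sigma(g(\mathbf{x}_i,\mathbf{W})+b_k)\big)\,(1-y_i^{(k)})\Big].$$ Then any optimal solution $(\mathbf{W}^*,\mathbf{b}^* )$ minimizing $L$ satisfies $b_1^*\ge b_2^*\ge\cdots\ge b_{K-1}^*$.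
   Context: This is the loss of the CORAL (consistent rank logits) framework: a single shared score $g(\mathbf{x},\mathbf{W})$ is fed to $K-1$ binary classifiers that differ only in their bias terms $b_k$; the predicted probability for task $k$ is $\widehat P(y^{(k)}=1)=\sigma(g(\mathbf{x},\mathbf{W})+b_k)$. *)

(* Defs.v *)
From HB Require Import structures.
From mathcomp Require Import all_boot all_order all_algebra.
From mathcomp Require Import all_classical all_reals all_analysis.
Set Implicit Arguments. Unset Strict Implicit. Unset Printing Implicit Defensive.
Import Order.TTheory GRing.Theory Num.Theory.
Local Open Scope ring_scope.

Definition sigmoid {R : realType} (z : R) : R := 1 / (1 + expR (- z)).

(* Ranks r_1 < ... < r_K are represented by 'I_K (0-based, natural order).
   Tasks k = 1..K-1 are represented 0-based by k : 'I_K.-1; task k' (0-based)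
   corresponds to rank threshold r_{k'+1}, i.e. index k' of 'I_K.
   y_i^{(k)} = 1{ y_i > r_k }  becomes  (k' < y_i). *)
Definition ext_label {R : realType} (K N : nat) (y : 'I_N -> 'I_K)
  (i : 'I_N) (k : 'I_K.-1) : R :=
  if (nat_of_ord k < nat_of_ord (y i))%N then 1 else 0.

Definition coral_loss {R : realType} (X Wt : Type) (K N : nat)
  (g : X -> Wt -> R) (x : 'I_N -> X) (y : 'I_N -> 'I_K)
  (lam : 'I_K.-1 -> R) (W : Wt) (b : 'I_K.-1 -> R) : R :=
  - \sum_(i < N) \sum_(k < K.-1)
      lam k * (ln (sigmoid (g (x i) W + b k)) * @ext_label R _ _ y i k
               + ln (1 - sigmoid (g (x i) W + b k)) * (1 - @ext_label R _ _ y i k)).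

(* Main.v *)
Require Import Defs.
From HB Require Import structures.
From mathcomp Require Import all_boot all_order all_algebra.
From mathcomp Require Import all_classical all_reals all_analysis.
From mathcomp Require Import ring lra.
Import Order.TTheory GRing.Theory Num.Theory.
Local Open Scope ring_scope.

Section S.
Variable R : realType.
Definition sp (z : R) := ln (1 + expR z).

Lemma sig_eq (z : R) : sigmoid z = expR z / (1 + expR z).
Proof.
rewrite /sigmoid expRN.
have h := expR_gt0 z.
field. apply/andP; split; rewrite ?gt_eqF //; lra.
Qed.

Lemma L1 (z : R) : ln (1 - sigmoid z) = - sp z.
Proof.
have h := expR_gt0 z.
have -> : 1 - sigmoid z = (1 + expR z)^-1.
  rewrite sig_eq; field; rewrite gt_eqF //; lra.
rewrite lnV //; rewrite posrE; lra.
Qed.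

Lemma L2 (z : R) : ln (sigmoid z) = z - sp z.
Proof.
have h := expR_gt0 z.
rewrite sig_eq lnM ?lnV ?expRK // ?posrE ?invr_gt0; lra.
Qed.

Lemma L3 (u v : R) : u != v -> 2 * sp ((u + v) / 2) < sp u + sp v.
Proof.
move=> uv.
set a := expR (u / 2); set c := expR (v / 2).
have ha : 0 < a by apply: expR_gt0.
have hc : 0 < c by apply: expR_gt0.
have eu : expR u = a * a by rewrite /a -expRD; congr expR; field.
have ev : expR v = c * c by rewrite /c -expRD; congr expR; field.
have em : expR ((u + v) / 2) = a * c by rewrite /a /c -expRD; congr expR; field.
have ac : a != c.
  apply/negP => /eqP /expR_inj h; move/negP: uv; apply; apply/eqP.
  have : u = 2 * (u / 2) by field.
  have : v = 2 * (v / 2) by field.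
  move=> -> ->; by rewrite h.
rewrite /sp eu ev em -lnM ?posrE; try nra.
have -> : 2 * ln (1 + a * c) = ln ((1 + a * c) * (1 + a * c)).
  rewrite lnM ?posrE; try nra.
rewrite ltr_ln ?posrE; try nra.
Qed.
End S.
Arguments sp {R}.

Lemma term_eq (R : realType) (w e : R) : (e = 0 \/ e = 1) ->
  ln (sigmoid w) * e + ln (1 - sigmoid w) * (1 - e) = e * w - sp w.
Proof. rewrite L1 L2 => -[] ->; ring. Qed.

Lemma ext01 (R : realType) K N (y : 'I_N -> 'I_K) i k :
  @ext_label R K N y i k = 0 \/ @ext_label R K N y i k = 1.
Proof. rewrite /ext_label; case: ifP; auto. Qed.

Definition GG (R : realType) (X Wt : Type) (K N : nat)
  (g : X -> Wt -> R) (x : 'I_N -> X) (y : 'I_N -> 'I_K) W (k : 'I_K.-1) (z : R) :=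
  \sum_(i < N) (@ext_label R _ _ y i k * (g (x i) W + z) - sp (g (x i) W + z)).

Arguments GG {R X Wt K N}.
Lemma loss_eq (R : realType) (X Wt : Type) (K N : nat)
  (g : X -> Wt -> R) (x : 'I_N -> X) (y : 'I_N -> 'I_K) lam W b :
  coral_loss g x y lam W b = - \sum_(k < K.-1) lam k * GG g x y W k (b k).
Proof.
rewrite /coral_loss exchange_big /=; congr (- _); apply: eq_bigr => k _.
rewrite /GG mulr_sumr; apply: eq_bigr => i _; by rewrite term_eq //; apply: ext01.
Qed.

Lemma opt_k (R : realType) (X Wt : Type) (K N : nat)
  (x : 'I_N -> X) (y : 'I_N -> 'I_K) (g : X -> Wt -> R)
  (lam : 'I_K.-1 -> R) (hlam : forall k, 0 < lam k)
  (Wstar : Wt) (bstar : 'I_K.-1 -> R)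
  (hopt : forall (W : Wt) (b : 'I_K.-1 -> R),
      coral_loss g x y lam Wstar bstar <= coral_loss g x y lam W b) j z :
  GG g x y Wstar j z <= GG g x y Wstar j (bstar j).
Proof.
have := hopt Wstar (fun k => if k == j then z else bstar k).
rewrite !loss_eq lerN2 (bigD1 j) //= [X in _ <= X](bigD1 j) //= eqxx.
under eq_bigr => k hk do rewrite (negbTE hk).
by rewrite lerD2r ler_pM2l.
Qed.

Theorem theorem1 (R : realType) (X Wt : Type) (K N : nat)
  (hK : (2 <= K)%N) (hN : (0 < N)%N)
  (x : 'I_N -> X) (y : 'I_N -> 'I_K) (g : X -> Wt -> R)
  (lam : 'I_K.-1 -> R) (hlam : forall k, 0 < lam k)
  (Wstar : Wt) (bstar : 'I_K.-1 -> R)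
  (hopt : forall (W : Wt) (b : 'I_K.-1 -> R),
      coral_loss g x y lam Wstar bstar <= coral_loss g x y lam W b) :
  forall k1 k2 : 'I_K.-1, (k1 <= k2)%N -> bstar k2 <= bstar k1.
Proof.
move=> k1 k2 hk; rewrite leNgt; apply/negP => hlt.
set b1 := bstar k1 in hlt *; set b2 := bstar k2 in hlt *.
set m := (b1 + b2) / 2.
have o1 := @opt_k R X Wt K N x y g lam hlam Wstar bstar hopt k1 m.
have o2 := @opt_k R X Wt K N x y g lam hlam Wstar bstar hopt k2 m.
rewrite -/b1 in o1; rewrite -/b2 in o2.
have hd : GG g x y Wstar k2 m - GG g x y Wstar k2 b1 <=
          GG g x y Wstar k1 m - GG g x y Wstar k1 b1.
  rewrite -subr_ge0 /GG -!sumrB; apply: sumr_ge0 => i _.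
  have hm : 0 <= m - b1 by rewrite /m; lra.
  rewrite /ext_label; case: ifP => ha; case: ifP => hb; try lra;
  first [ by move: ha; rewrite (leq_ltn_trans hk hb)
        | by move: hb; rewrite (leq_ltn_trans hk ha) | idtac ].
have hs : GG g x y Wstar k2 b1 + GG g x y Wstar k2 b2 < 2 * GG g x y Wstar k2 m.
  rewrite /GG -big_split mulr_sumr /=.
  apply: (ltr_sum (P := predT)).
    by apply/hasP; exists (Ordinal hN); rewrite ?mem_index_enum.
  move=> i _.
  have := @L3 R (g (x i) Wstar + b1) (g (x i) Wstar + b2).
  have -> : (g (x i) Wstar + b1 + (g (x i) Wstar + b2)) / 2 = g (x i) Wstar + m.
    by rewrite /m; field.
  have : g (x i) Wstar + b1 != g (x i) Wstar + b2.
    by apply/negP => /eqP h; move: hlt; rewrite lt_neqAle (addrI _ h) eqxx.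
  move=> h /(_ h).
  set e := ext_label _ _ _.
  have : e * (g (x i) Wstar + b1) + e * (g (x i) Wstar + b2) =
         2 * (e * (g (x i) Wstar + m)) by rewrite /m; field.
  lra.
lra.
Qed.
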